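(* Let $X\subset\mathbb{R}^n$ be a closed set which is the closure of its interior, $f:X\to\mathbb{R}^n$ locally Lipschitz, and suppose $\dot x=f(x)$ is forward complete with flow $\varphi_t$. Let $K$ be a closed convex cone with nonempty interior and suppose the system is strongly monotone in reversed time: for every $\xi_1,\xi_2\in X$ and every $t<0$ such that $\varphi_t(\xi_1),\varphi_t(\xi_2)$ are defined, $\xi_1\succ\xi_2$ implies $\varphi_t(\xi_1)\gg\varphi_t(\xi_2)$. Let $v\in\operatorname{int}(K)$, $|v|=1$, with $X$ invariant under translation by $v$ and $\varphi_t(\xi+\lambda v)=\varphi_t(\xi)+\lambda v$ for all $\lambda\in\mathbb{R}$, $\xi\in X$ and all $t$ at which $\varphi_t(\xi)$ is defined. Let $\pi_v(x)=x-(v'x)v$. Then for every $\xi\in X$ such that $\pi_v(\varphi_t(\xi))$ is bounded for $t\ge0$, $\pi_v(\varphi_t(\xi))$ converges as $t\to\infty$ to an equilibrium of the projected system $\dot{\tilde x}=(I-vv')f(\tilde x)$ on $X\cap v^\perp$; moreover this equilibrium is unique (the projected system has no other equilibrium).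
   Context: The cone $K$ satisfies $K+K\subset K$, $\alpha K\subset K$ for $\alpha\ge0$, $K\cap(-K)=\{0\}$. $\xi_1\succeq\xi_2$ iff $\xi_1-\xi_2\in K$; $\xi_1\succ\xi_2$ iff additionally $\xi_1\neq\xi_2$; $\xi_1\gg\xi_2$ iff $\xi_1-\xi_2\in\operatorname{int}(K)$. Forward complete means every solution is uniquely defined in $X$ on an interval containing $[0,\infty)$ in its interior. *)

(* Defs.v *)
From HB Require Import structures.
From mathcomp Require Import all_boot all_order all_algebra.
From mathcomp Require Import all_classical all_reals all_analysis.
Set Implicit Arguments. Unset Strict Implicit. Unset Printing Implicit Defensive.
Import Order.TTheory GRing.Theory Num.Theory.
Import numFieldNormedType.Exports.
Local Open Scope classical_set_scope.
Local Open Scope ring_scope.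

Section Defs.
Context {R : realType} {n : nat}.
Local Notation V := 'rV[R]_n.

Definition dotv (u w : V) : R := \sum_(i < n) u ord0 i * w ord0 i.

(* pi_v(x) = x - (v'x) v ; also (I - v v') y = pi_v y *)
Definition piv (v x : V) : V := x - dotv v x *: v.

Definition is_interval (J : set R) :=
  forall a b c, J a -> J c -> a <= b -> b <= c -> J b.

Definition solution (X : set V) (f : V -> V) (J : set R) (x : R -> V) :=
  [/\ is_interval J, (forall t, J t -> X (x t)),
      {within J, continuous x} &
      (forall t, interior J t -> is_derive t 1 x (f (x t)))].

Definition locally_lipschitz_on (X : set V) (f : V -> V) :=
  forall x, X x -> exists r : R, exists L : R, 0 < r /\
    forall y z, X y -> X z -> `|y - x| < r -> `|z - x| < r ->
      `|f y - f z| <= L * `|y - z|.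

(* phi is the (maximal) flow of x' = f(x) in X, D xi being the maximal domain
   of the solution through xi: phi(., xi) is a solution on D xi with
   phi 0 xi = xi, and every solution through xi on an interval containing 0
   lives inside D xi and agrees with phi(., xi). *)
Definition is_flow (X : set V) (f : V -> V) (D : V -> set R) (phi : R -> V -> V) :=
  forall xi, X xi ->
    [/\ D xi 0, phi 0 xi = xi, solution X f (D xi) (fun t => phi t xi) &
        forall (J : set R) (x : R -> V), J 0 -> x 0 = xi -> solution X f J x ->
          J `<=` D xi /\ (forall t, J t -> x t = phi t xi)].

Definition forward_complete (X : set V) (f : V -> V) (D : V -> set R)
    (phi : R -> V -> V) :=
  is_flow X f D phi /\
  forall xi, X xi -> exists a : R, a < 0 /\ `]a, +oo[ `<=` D xi.

Definition proper_cone (K : set V) :=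
  [/\ closed K, (forall a b, K a -> K b -> K (a + b)),
      (forall (al : R) a, 0 <= al -> K a -> K (al *: a)),
      (forall a, K a -> K (- a) -> a = 0) &
      (exists a, interior K a)].

Definition cone_succ (K : set V) (x y : V) := K (x - y) /\ x <> y.
Definition cone_gg (K : set V) (x y : V) := interior K (x - y).

End Defs.

(* Main.v *)
Require Import Defs.
From HB Require Import structures.
From mathcomp Require Import all_boot all_order all_algebra.
From mathcomp Require Import all_classical all_reals all_analysis.
From mathcomp Require Import ring lra.
Import Order.TTheory GRing.Theory Num.Theory.
Import numFieldNormedType.Exports.
Local Open Scope classical_set_scope.
Local Open Scope ring_scope.

Set Implicit Arguments. Unset Strict Implicit. Unset Printing Implicit Defensive.

Section Cone.
Variables (R : realType) (n : nat) (K : set 'rV[R]_n) (v : 'rV[R]_n).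
Hypothesis HK : proper_cone K.
Hypothesis Hv : interior K v.
Hypothesis Hvv : dotv v v = 1.
Local Notation V := 'rV[R]_n.

Lemma int_ball (b : V) : interior K b -> exists2 r : R, 0 < r & forall y, `|b - y| < r -> K y.
Proof.
move=> /nbhs_ballP[r r0 Hr]; exists r => // y Hy; apply: Hr.
by rewrite -ball_normE.
Qed.

Lemma K0 : K 0.
Proof.
case: HK => _ _ Hs _ [a /nbhs_singleton Ka].
by rewrite -(scale0r a); apply: Hs.
Qed.

Lemma KD a b : K a -> K b -> K (a + b).
Proof. by case: HK => _ H _ _ _; apply: H. Qed.
Lemma KZ (al : R) a : 0 <= al -> K a -> K (al *: a).
Proof. by case: HK => _ _ H _ _; apply: H. Qed.
Lemma Kpt a : K a -> K (- a) -> a = 0.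
Proof. by case: HK => _ _ _ H _; apply: H. Qed.
Lemma Kcl : closed K.
Proof. by case: HK. Qed.

Lemma Kv : K v.
Proof. exact: nbhs_singleton Hv. Qed.

Lemma v_neq0 : v != 0.
Proof.
apply/eqP => v0; move: Hvv; rewrite v0 /dotv big1 => [/eqP|i _].
  by rewrite eq_sym oner_eq0.
by rewrite mxE mul0r.
Qed.

Lemma normv_gt0 : 0 < `|v|.
Proof. by rewrite normr_gt0 v_neq0. Qed.


Variable r : R.
Hypothesis Hr0 : 0 < r.
Hypothesis Hrb : forall y, `|v - y| < r -> K y.

Lemma Sbig u l : `|u| / r < l -> K (u + l *: v).
Proof.
move=> Hl.
have l0 : 0 < l by apply: le_lt_trans Hl; rewrite divr_ge0 // ltW.
have -> : u + l *: v = l *: (l^-1 *: u + v).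
  by rewrite scalerDr scalerA mulfV ?gt_eqF // scale1r.
apply: KZ; first exact: ltW.
apply: Hrb; rewrite opprD addrCA subrr addr0 normrN normrZ gtr0_norm ?invr_gt0 //.
rewrite mulrC ltr_pdivrMr //; rewrite ltr_pdivrMr // in Hl.
by rewrite mulrC.
Qed.

Lemma vZ_ge0 c : K (c *: v) -> 0 <= c.
Proof.
move=> Kc; rewrite leNgt; apply/negP => c0.
have : K (- v).
  have -> : - v = (- c^-1) *: (c *: v).
    by rewrite scalerA mulNr mulVf ?lt_eqF // scaleN1r.
  by apply: KZ => //; rewrite oppr_ge0 invr_le0 ltW.
by move/(Kpt Kv)/eqP; rewrite (negbTE v_neq0).
Qed.

Lemma Sup u l l' : K (u + l *: v) -> l <= l' -> K (u + l' *: v).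
Proof.
move=> Kl ll'.
have -> : u + l' *: v = (u + l *: v) + (l' - l) *: v.
  by rewrite -addrA -scalerDl addrCA subrr addr0.
by apply: KD => //; apply: KZ; [rewrite subr_ge0 | exact: Kv].
Qed.

Lemma Slb u l : K (u + l *: v) -> - (`|u| / r + 1) <= l.
Proof.
move=> Kl.
have K2 : K (- u + (`|u| / r + 1) *: v).
  by apply: Sbig; rewrite normrN ltrDl.
have := KD Kl K2.
rewrite addrACA addrN add0r -scalerDl.
move=> /vZ_ge0 H; lra.
Qed.

Definition Sset (u : 'rV[R]_n) := [set l : R | K (u + l *: v)].
Definition mu u := inf (Sset u).

Lemma S_ne u : Sset u !=set0.
Proof. by exists (`|u| / r + 1); apply: Sbig; rewrite ltrDl. Qed.

Lemma S_lb u : has_lbound (Sset u).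
Proof. by exists (- (`|u| / r + 1)) => l; apply: Slb. Qed.

Lemma mu_le u l : K (u + l *: v) -> mu u <= l.
Proof. by move=> Kl; apply: (ge_inf (S_lb u)). Qed.

Lemma mu_ge u : - (`|u| / r + 1) <= mu u.
Proof. by apply: lb_le_inf; [exact: S_ne | move=> l; apply: Slb]. Qed.

Lemma mu_in u : K (u + mu u *: v).
Proof.
apply: Kcl => B /nbhs_ballP [e e0 He].
have [l Sl Hl] := inf_adherent (divr_gt0 e0 normv_gt0) (conj (S_ne u) (S_lb u)).
have mul : mu u <= l := mu_le Sl.
exists (u + l *: v); split => //; apply: He.
rewrite -ball_normE /ball_ /= opprD addrACA subrr add0r -scalerBl normrZ.
rewrite -ltr_pdivlMr ?normv_gt0 // ler0_norm ?subr_le0 //.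
by rewrite opprB ltrBlDl.
Qed.

Lemma mu_ub u : mu u <= `|u| / r.
Proof. by apply/ler_addgt0Pr => e e0; apply: mu_le; apply: Sbig; rewrite ltrDl. Qed.

Lemma mu_shift u c : mu (u + c *: v) = mu u - c.
Proof.
apply/eqP; rewrite eq_le; apply/andP; split.
  by apply: mu_le; rewrite -addrA -scalerDl addrCA subrr addr0; exact: mu_in.
rewrite lerBlDr; apply: mu_le.
have -> : u + (mu (u + c *: v) + c) *: v = u + c *: v + mu (u + c *: v) *: v.
  by rewrite scalerDl (addrC (mu _ *: v)) addrA.
exact: mu_in.
Qed.

Lemma mu_sub u1 u2 : mu (u1 + u2) <= mu u1 + mu u2.
Proof.
apply: mu_le; rewrite scalerDl addrACA.
by apply: KD; exact: mu_in.
Qed.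

Lemma mu0 : mu 0 = 0.
Proof.
apply/eqP; rewrite eq_le; apply/andP; split.
  by apply: mu_le; rewrite scale0r addr0; exact: K0.
by apply: vZ_ge0; have := mu_in 0; rewrite add0r.
Qed.

Lemma mu_opp_ge u : 0 <= mu u + mu (- u).
Proof. by rewrite -mu0 -(subrr u); apply: mu_sub. Qed.

Definition w (y z : 'rV[R]_n) := mu (z - y) + mu (y - z).

Lemma w_ge0 y z : 0 <= w y z.
Proof. by have := mu_opp_ge (z - y); rewrite opprB. Qed.

Lemma w_sym y z : w y z = w z y.
Proof. by rewrite /w addrC. Qed.

Lemma w_tri a b c : w a c <= w a b + w b c.
Proof.
rewrite /w addrACA [mu (b - a) + _]addrC; apply: lerD.
  by have := mu_sub (c - b) (b - a); rewrite addrA subrK.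
by have := mu_sub (a - b) (b - c); rewrite addrA subrK.
Qed.

Lemma w_le y z : w y z <= 2 * (`|z - y| / r).
Proof.
have h1 := mu_ub (z - y); have h2 := mu_ub (y - z).
rewrite distrC in h2; rewrite /w; lra.
Qed.

Lemma w_shift y z a b : w (y + a *: v) (z + b *: v) = w y z.
Proof.
rewrite /w.
have -> : z + b *: v - (y + a *: v) = (z - y) + (b - a) *: v.
  by rewrite scalerBl opprD addrACA.
have -> : y + a *: v - (z + b *: v) = (y - z) + (a - b) *: v.
  by rewrite scalerBl opprD addrACA.
rewrite !mu_shift; lra.
Qed.

Lemma w_self_shift y c : w y (y + c *: v) = 0.
Proof.
have := w_shift y y 0 c; rewrite scale0r addr0 => ->.
by rewrite /w subrr mu0 addr0.
Qed.

Lemma w0 y z : w y z <= 0 -> z = y + (- mu (z - y)) *: v.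
Proof.
move=> wle.
have we : mu (z - y) + mu (y - z) = 0 by apply/eqP; rewrite eq_le wle w_ge0.
have K1 := mu_in (z - y); have K2 := mu_in (y - z).
have e : (z - y + mu (z - y) *: v) + (y - z + mu (y - z) *: v) = 0.
  by rewrite addrACA -scalerDl we scale0r addr0 addrA subrK subrr.
have : z - y + mu (z - y) *: v = 0.
  apply: Kpt => //.
  have -> : - (z - y + mu (z - y) *: v) = y - z + mu (y - z) *: v.
    by apply/eqP; rewrite eq_sym -subr_eq0 opprK addrC e.
  exact: K2.
move/eqP; rewrite addr_eq0 => /eqP H.
by rewrite scaleNr -H addrC subrK.
Qed.

Lemma int_shift b : interior K b -> exists2 e : R, 0 < e & K (b - e *: v).
Proof.
move=> /int_ball [rho rho0 Hb].
have e0 : 0 < rho / (2 * `|v|) by rewrite divr_gt0 // mulr_gt0 // normv_gt0.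
exists (rho / (2 * `|v|)) => //; apply: Hb.
rewrite opprB addrC subrK normrZ gtr0_norm //.
have nv := normv_gt0.
have -> : rho / (2 * `|v|) * `|v| = rho / 2 by field; rewrite gt_eqF.
lra.
Qed.

Variables (X : set 'rV[R]_n) (f : 'rV[R]_n -> 'rV[R]_n) (D : 'rV[R]_n -> set R)
  (phi : R -> 'rV[R]_n -> 'rV[R]_n).
Hypothesis Hfc : forward_complete X f D phi.
Hypothesis HXt : forall xi (lam : R), X xi -> X (xi + lam *: v).
Hypothesis Hphit : forall xi (lam : R) t, X xi -> D xi t ->
     phi t (xi + lam *: v) = phi t xi + lam *: v.

Lemma flowP y : X y ->
  [/\ D y 0, phi 0 y = y, solution X f (D y) (fun t => phi t y) &
        forall (J : set R) (x : R -> 'rV[R]_n), J 0 -> x 0 = y -> solution X f J x ->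
          J `<=` D y /\ (forall t, J t -> x t = phi t y)].
Proof. by move=> Xy; case: Hfc => H _; apply: H. Qed.

Lemma Dbig y : X y -> exists2 a : R, a < 0 & forall t, a < t -> D y t.
Proof.
move=> Xy; case: Hfc => _ /(_ y Xy) [a [a0 Ha]]; exists a => // t ht.
by apply: Ha; rewrite /= in_itv /= ht.
Qed.

Lemma D0int y : X y -> interior (D y) 0.
Proof.
move=> Xy; have [a a0 Ha] := Dbig Xy.
apply/nbhs_ballP; exists (- a); first by rewrite /= oppr_gt0.
move=> t; rewrite -ball_normE /ball_ /= sub0r normrN => H; apply: Ha.
have := ler_norm t; rewrite -normrN => H2.
have : - t <= `|t| by rewrite -normrN ler_norm.
lra.
Qed.

Lemma phiX y t : X y -> D y t -> X (phi t y).
Proof. by move=> Xy; case: (flowP Xy) => _ _ [_ H _ _] _; apply: H. Qed.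

Lemma f_transl y l : X y -> f (y + l *: v) = f y.
Proof.
move=> Xy; have Xy' := HXt l Xy.
case: (flowP Xy') => D0' p0' [_ _ _ Hd'] _.
case: (flowP Xy) => D0 p0 [_ _ _ Hd] _.
have d1 := Hd' 0 (D0int Xy'); rewrite p0' in d1.
have d2 := Hd 0 (D0int Xy); rewrite p0 in d2.
have d3 : is_derive (0:R) (1:R) (fun t => phi t y + l *: v) (f y + 0).
  by apply: is_deriveD.
rewrite addr0 in d3.
have d4 : is_derive (0:R) (1:R) (fun t => phi t (y + l *: v)) (f y).
  apply: near_eq_is_derive d3.
  have := D0int Xy; rewrite /interior => H.
  by near=> t; rewrite Hphit //; near: t.
have := @derive_val _ _ _ _ _ _ _ d1.
by rewrite (@derive_val _ _ _ _ _ _ _ d4).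
Unshelve. all: by end_near.
Qed.

Lemma within_cst_add (J : set R) (x : R -> 'rV[R]_n) c :
  {within J, continuous x} -> {within J, continuous (fun t => x t + c)}.
Proof.
move=> /subspace_continuousP H; apply/subspace_continuousP => t Jt.
by apply: cvgD; [exact: H | exact: cvg_cst].
Qed.

Lemma shift_nbhs (T s : R) (P : set R) : nbhs (T + s) P -> nbhs s (fun u => P (T + u)).
Proof.
move=> HP.
have C : (fun u => T + u) @ s --> T + s by apply: cvgD; [exact: cvg_cst | exact: cvg_id].
exact: C HP.
Qed.

Lemma shift_within (J : set R) (T s : R) :
  (fun u => T + u) @ within [set u | J (T + u)] (nbhs s) --> within J (nbhs (T + s)).
Proof. by move=> P HP; exact: (shift_nbhs HP). Qed.

Lemma interior_shift (J : set R) (T s : R) :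
  interior [set u | J (T + u)] s -> interior J (T + s).
Proof.
rewrite /interior => H.
have H2 : nbhs (- T + (T + s)) [set u | J (T + u)] by rewrite addKr.
have := shift_nbhs H2.
by have -> : (fun u => [set u | J (T + u)] (- T + u)) = J by apply/funext => z /=; rewrite addNKr.
Qed.

Lemma is_derive_shiftT (g : R -> 'rV[R]_n) (T s : R) df :
  is_derive (T + s) 1 g df -> is_derive s 1 (fun u => g (T + u)) df.
Proof.
case=> dg dv.
have E : (fun h : R => h^-1 *: (((fun u => g (T + u)) \o shift s) (h *: 1) - g (T + s)))
   = (fun h => h^-1 *: ((g \o shift (T + s)) (h *: 1) - g (T + s))).
  by apply/funext => h /=; rewrite addrCA.
apply: DeriveDef.
  by move: dg; rewrite /derivable -E.
by rewrite -dv /derive E.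
Qed.

Lemma D_transl y l : X y -> D y `<=` D (y + l *: v).
Proof.
move=> Xy; have Xy' := HXt l Xy.
case: (flowP Xy) => D0 p0 [Hi HX Hc Hd] _.
case: (flowP Xy') => _ _ _ Hmax.
have [] := Hmax (D y) (fun t => phi t y + l *: v) D0; first by rewrite p0.
  split => //.
  - by move=> t Dt; apply: HXt; apply: HX.
  - exact: within_cst_add.
  - move=> t It.
    have d : is_derive t 1 (fun t => phi t y + l *: v) (f (phi t y) + 0).
      by have dd := Hd t It; apply: is_deriveD.
    by rewrite addr0 -(f_transl l (HX t (nbhs_singleton It))) in d.
by [].
Qed.

Lemma shift_sol y T : X y -> D y T -> forall s, D y (T + s) ->
  D (phi T y) s /\ phi s (phi T y) = phi (T + s) y.
Proof.
move=> Xy DT; have Xz := phiX Xy DT.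
case: (flowP Xy) => D0 p0 [Hi HX Hc Hd] _.
case: (flowP Xz) => _ _ _ Hmax.
have [] := Hmax [set s | D y (T + s)] (fun s => phi (T + s) y).
- by rewrite /= addr0.
- by rewrite addr0.
- split.
  + move=> a b c /= Ja Jc ab bc; apply: (Hi (T + a) (T + b) (T + c)) => //; rewrite lerD2l //.
  + by move=> s Js; apply: HX.
  + apply/subspace_continuousP => s Js.
    have := (subspace_continuousP _ _).1 Hc (T + s) Js.
    move=> Hc'; exact: (@cvg_comp _ _ _ (fun u => T + u) (fun t => phi t y) _ _ _ (@shift_within (D y) T s) Hc').
  + move=> s Is; apply: (@is_derive_shiftT (fun t => phi t y) T s); apply: Hd; exact: interior_shift.
- move=> H1 H2 s Ds; split; first exact: H1.
  by rewrite H2.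
Qed.

Hypothesis Hmono : forall xi1 xi2 t, X xi1 -> X xi2 -> t < 0 -> D xi1 t -> D xi2 t ->
     cone_succ K xi1 xi2 -> cone_gg K (phi t xi1) (phi t xi2).

Lemma mono_mu y z t : X y -> X z -> t < 0 -> D y t -> D z t ->
  mu (phi t z - phi t y) <= mu (z - y) /\
  (z - y + mu (z - y) *: v != 0 -> mu (phi t z - phi t y) < mu (z - y)).
Proof.
move=> Xy Xz t0 Dy Dz.
set l := mu (z - y).
have key : z - y + l *: v != 0 -> mu (phi t z - phi t y) < l.
  move=> ne; have Xz' := HXt l Xz; have Dz' := D_transl l Xz Dz.
  have sc : cone_succ K (z + l *: v) y.
    split; first by rewrite addrAC; exact: mu_in.
    move=> e; move: ne; rewrite addrAC e subrr eqxx //.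
  have := Hmono Xz' Xy t0 Dz' Dy sc; rewrite /cone_gg Hphit // => Hi.
  have [e e0 Ke] := int_shift Hi.
  have : mu (phi t z - phi t y) <= l - e.
    apply: mu_le.
    have -> : phi t z - phi t y + (l - e) *: v = phi t z + l *: v - phi t y - e *: v.
      by rewrite scalerBl addrA (addrAC (phi t z)).
    exact: Ke.
  lra.
split; last exact: key.
have [e|ne] := eqVneq (z - y + l *: v) 0; last by move/key/ltW: ne.
have ez : z = y + (- l) *: v.
  by move/eqP: e; rewrite addr_eq0 => /eqP H; rewrite scaleNr -H addrC subrK.
rewrite ez Hphit // addrC addKr.
by rewrite -[X in mu X]add0r mu_shift mu0 sub0r opprK.
Qed.

Lemma mono_w y z t : X y -> X z -> t < 0 -> D y t -> D z t ->
  w (phi t y) (phi t z) <= w y z /\ (0 < w y z -> w (phi t y) (phi t z) < w y z).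
Proof.
move=> Xy Xz t0 Dy Dz.
have [h1 s1] := mono_mu Xy Xz t0 Dy Dz.
have [h2 s2] := mono_mu Xz Xy t0 Dz Dy.
split; first by rewrite /w; apply: lerD.
move=> wp; rewrite /w.
have ne : z - y + mu (z - y) *: v != 0.
  apply/eqP => e; move: wp.
  have ez : z = y + (- mu (z - y)) *: v.
    by move/eqP: e; rewrite addr_eq0 => /eqP H; rewrite scaleNr -H addrC subrK.
  by rewrite ez w_self_shift ltxx.
have := s1 ne; lra.
Qed.

Lemma dotvD a b : dotv v (a + b) = dotv v a + dotv v b.
Proof. by rewrite /dotv -big_split /=; apply: eq_bigr => i _; rewrite mxE mulrDr. Qed.

Lemma dotvZ c a : dotv v (c *: a) = c * dotv v a.
Proof. by rewrite /dotv mulr_sumr; apply: eq_bigr => i _; rewrite mxE mulrCA. Qed.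

Lemma pivE a : piv v a = a + (- dotv v a) *: v.
Proof. by rewrite /piv scaleNr. Qed.

Lemma piv_shift a c : piv v (a + c *: v) = piv v a.
Proof.
rewrite /piv dotvD dotvZ Hvv mulr1 scalerDl opprD addrACA subrr addr0 //.
Qed.

Lemma w_piv a b : w (piv v a) (piv v b) = w a b.
Proof. by rewrite !pivE w_shift. Qed.

Lemma dotv_piv a : dotv v (piv v a) = 0.
Proof. by rewrite pivE dotvD dotvZ Hvv mulr1 subrr. Qed.

Lemma Xpiv a : X a -> X (piv v a).
Proof. by move=> Xa; rewrite pivE; apply: HXt. Qed.

Lemma Dpos y t : X y -> 0 <= t -> D y t.
Proof. by move=> Xy t0; have [a a0 Ha] := Dbig Xy; apply: Ha; lra. Qed.

Lemma back y t tau : X y -> 0 <= tau -> tau <= t ->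
  D (phi t y) (- tau) /\ phi (- tau) (phi t y) = phi (t - tau) y.
Proof.
move=> Xy tau0 taut.
have Dt : D y t by apply: Dpos => //; lra.
apply: (shift_sol Xy Dt); apply: Dpos => //; lra.
Qed.

Lemma w_piv_l a b : w (piv v a) b = w a b.
Proof.
by have := w_shift a b (- dotv v a) 0; rewrite scale0r addr0 -pivE.
Qed.

Lemma w_piv_r a b : w a (piv v b) = w a b.
Proof. by rewrite w_sym w_piv_l w_sym. Qed.

Lemma wlt y z d : `|z - y| < d * r -> w y z < 2 * d.
Proof.
move=> h; apply: le_lt_trans (w_le y z) _.
rewrite ltr_pM2l // ltr_pdivrMr //.
Qed.

Lemma g_mono xi s t1 t2 : X xi -> 0 <= s -> 0 <= t1 -> t1 <= t2 ->
  w (phi t1 xi) (phi (t1 + s) xi) <= w (phi t2 xi) (phi (t2 + s) xi).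
Proof.
move=> Xxi s0 t10 t12.
have [e|ne] := eqVneq t1 t2; first by rewrite e.
have lt : t1 < t2 by rewrite lt_neqAle ne t12.
pose tau := t2 - t1.
have tau0 : 0 <= tau by rewrite /tau; lra.
have l1 : tau <= t2 by rewrite /tau; lra.
have l2 : tau <= t2 + s by rewrite /tau; lra.
have l3 : 0 <= t2 by lra.
have l4 : 0 <= t2 + s by lra.
have l5 : - tau < 0 by rewrite /tau; lra.
have [D1 E1] := back Xxi tau0 l1.
have [D2 E2] := back Xxi tau0 l2.
have X1 := phiX Xxi (Dpos Xxi l3).
have X2 := phiX Xxi (Dpos Xxi l4).
have [h _] := mono_w X1 X2 l5 D1 D2.
rewrite E1 E2 in h.
have e1 : t2 - tau = t1 by rewrite /tau; ring.
have e2 : t2 + s - tau = t1 + s by rewrite /tau; ring.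
by rewrite e1 e2 in h.
Qed.

Hypothesis HXc : closed X.

Lemma main_claim xi M s : X xi -> (forall t, 0 <= t -> `|piv v (phi t xi)| <= M) ->
  0 <= s -> w xi (phi s xi) = 0.
Proof.
move=> Xxi HM s0.
have M0 : 0 <= M by apply: le_trans (HM 0 (lexx 0)); exact: normr_ge0.
have p0 : phi 0 xi = xi by case: (flowP Xxi).
pose p t := piv v (phi t xi).
pose g t := w (phi t xi) (phi (t + s) xi).
have gm : forall t1 t2, 0 <= t1 -> t1 <= t2 -> g t1 <= g t2.
  by move=> t1 t2 h1 h2; apply: g_mono.
have gb : forall t, 0 <= t -> g t <= 2 * ((M + M) / r).
  move=> t t0; rewrite /g -w_piv; apply: le_trans (w_le _ _) _.
  rewrite ler_pM2l // ler_pM2r ?invr_gt0 //.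
  apply: le_trans (ler_normB _ _) _; apply: lerD; apply: HM; lra.
apply/eqP; rewrite eq_le w_ge0 andbT leNgt; apply/negP => wpos.
have g0 : 0 < g 0 by rewrite /g add0r p0.
pose G := [set y | exists2 t, 0 <= t & y = g t].
have hsG : has_sup G.
  split; first by exists (g 0); exists 0.
  by exists (2 * ((M + M) / r)) => y [t t0 ->]; exact: gb.
pose L := sup G.
have gL : forall t, 0 <= t -> g t <= L.
  by move=> t t0; apply: (sup_upper_bound hsG); exists t.
have Lad : forall e, 0 < e -> exists2 T, 0 <= T & L - e < g T.
  by move=> e e0; have [y [T T0 ->] H] := sup_adherent e0 hsG; exists T.
pose B := X `&` closed_ball (0 : 'rV[R]_n) (M + 1).
have M1 : 0 < M + 1 by lra.
have cB : compact B.
  apply: bounded_closed_compact; last first.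
    by apply: closedI => //; exact: closed_ball_closed.
  rewrite /= /bounded_near; near=> M'; move=> y [_ By]; rewrite closed_ballE // /closed_ball_ /= sub0r normrN in By.
  rewrite /=; apply: le_trans By _; near: M'; apply: nbhs_pinfty_ge; exact: num_real.
have Bp : forall t, 0 <= t -> B (p t).
  move=> t t0; split; first by apply: Xpiv; apply: phiX Xxi (Dpos Xxi t0).
  by rewrite closed_ballE // /closed_ball_ /= sub0r normrN; have := HM t t0; lra.
pose F := (fun t => (p t, p (t + s))) @ +oo.
have FB' : \forall t \near +oo, (B `*` B) (p t, p (t + s)).
  near=> t; split => /=; apply: Bp.
    by near: t; apply: nbhs_pinfty_ge; exact: num_real.
  have : 0 <= t by near: t; apply: nbhs_pinfty_ge; exact: num_real.
  lra.
have FB : F (B `*` B) by exact: FB'.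
have [[q q'] [[Bq Bq'] clq]] := compact_setX cB cB _ FB.
have CL : forall e, 0 < e -> forall T, exists t,
    [/\ T <= t, 0 <= t, `|q - p t| < e & `|q' - p (t + s)| < e].
  move=> e e0 T.
  have FA : F [set z | exists t, [/\ T <= t, 0 <= t & z = (p t, p (t + s))]].
    have FA' : \forall t \near +oo,
        [set z | exists t, [/\ T <= t, 0 <= t & z = (p t, p (t + s))]] (p t, p (t + s)).
      apply: (filterS2 _ _ (nbhs_pinfty_ge (num_real T)) (nbhs_pinfty_ge (num_real (0:R)))).
      by move=> u h1 h2; exists u.
    exact: FA'.
  have [z [[t [Tt t0 ->]] [b1 b2]]] := clq _ _ FA (nbhsx_ballx (q, q') e e0).
  exists t; split => //.
    by move: b1; rewrite -ball_normE.
  by move: b2; rewrite -ball_normE.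
have Xq : X q by case: Bq.
have Xq' : X q' by case: Bq'.
have [a a0 Ha] := Dbig Xq; have [a' a0' Ha'] := Dbig Xq'.
have [a1 [a10 aa1 aa1']] : exists a1, [/\ a1 < 0, a <= a1 & a' <= a1].
  by case: (leP a a') => h; [exists a' | exists a]; split => //; lra.
pose t0 := a1 / 2.
have t0n : t0 < 0 by rewrite /t0; lra.
have Dq : D q t0 by apply: Ha; rewrite /t0; lra.
have Dq' : D q' t0 by apply: Ha'; rewrite /t0; lra.
pose q1 := phi t0 q; pose q1' := phi t0 q'.
have [mono1 mono2] := mono_w Xq Xq' t0n Dq Dq'.
have wpt : forall t, w (phi t xi) (phi (t + s) xi) = w (p t) (p (t + s)).
  by move=> t; rewrite /p w_piv.
have cB' : w q q' <= L.
  apply/ler_addgt0Pr => e e0.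
  have e4 : 0 < e / 4 * r by apply: mulr_gt0 => //; lra.
  have [t [_ t0' h1 h2]] := CL _ e4 0.
  have := w_tri q (p t) q'; have := w_tri (p t) (p (t + s)) q'.
  rewrite distrC in h1.
  have := wlt h1; have := wlt h2.
  have := gL t t0'; rewrite /g wpt.
  lra.
have cA : L <= w q1 q1'.
  apply/ler_addgt0Pr => e e0.
  have e2 : 0 < e / 2 by lra.
  have [T T0 hT] := Lad _ e2.
  have e8 : 0 < e / 8 * r by apply: mulr_gt0 => //; lra.
  have [t [Tt t0' h1 h2]] := CL _ e8 (T - t0).
  pose tau := - t0.
  have tau0 : 0 <= tau by rewrite /tau; lra.
  have l1 : tau <= t by rewrite /tau; lra.
  have l2 : tau <= t + s by rewrite /tau; lra.
  have l4 : 0 <= t + s by lra.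
  have [Db1 Eb1] := back Xxi tau0 l1.
  have [Db2 Eb2] := back Xxi tau0 l2.
  rewrite /tau opprK in Db1 Eb1 Db2 Eb2.
  have Xt := phiX Xxi (Dpos Xxi t0').
  have Xts := phiX Xxi (Dpos Xxi l4).
  have [m1 _] := mono_w Xt Xq t0n Db1 Dq.
  have [m2 _] := mono_w Xq' Xts t0n Dq' Db2.
  have m1' : w (phi (t + t0) xi) q1 <= w (p t) q.
    by rewrite /p w_piv_l -Eb1.
  have m2' : w q1' (phi (t + s + t0) xi) <= w q' (p (t + s)).
    by rewrite /p w_piv_r -Eb2.
  have gtt : g (t + t0) = w (phi (t + t0) xi) (phi (t + s + t0) xi).
    by rewrite /g addrAC.
  have gm' : g T <= g (t + t0) by apply: gm => //; lra.
  have tr1 := w_tri (phi (t + t0) xi) q1 (phi (t + s + t0) xi).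
  have tr2 := w_tri q1 q1' (phi (t + s + t0) xi).
  rewrite distrC in h1; rewrite distrC in h2.
  have := wlt h1; have := wlt h2.
  rewrite [w (p t) q]w_sym in m1'.
  lra.
have Lpos : 0 < L by apply: lt_le_trans g0 (gL 0 (lexx 0)).
have [wp|wn] := ltrP 0 (w q q').
  have := mono2 wp; rewrite -/q1 -/q1'; lra.
by move: mono1; rewrite -/q1 -/q1'; lra.
Unshelve. all: by end_near.
Qed.

Lemma equil y : X y -> piv v (f y) = 0 ->
  forall t, D y t /\ phi t y = y + t *: (dotv v (f y) *: v).
Proof.
move=> Xy hp.
set u := dotv v (f y) *: v.
have fy : f y = u by apply/eqP; rewrite -subr_eq0; apply/eqP.
case: (flowP Xy) => _ _ _ Hmax.
have [] := Hmax setT (fun t => y + t *: u) I; first by rewrite scale0r addr0.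
  split.
  - by [].
  - by move=> t _; rewrite /u scalerA; apply: HXt.
  - apply: continuous_subspaceT => t.
    by apply: cvgD; [exact: cvg_cst | exact: cvgZl cvg_id].
  - move=> t _.
    have d : is_derive t (1:R) (fun s : R => s *: u) u.
      apply: DeriveDef; first exact: diff_derivable.
      by rewrite deriveE // diff_val scale1r.
    have d2 : is_derive t (1:R) (fun s : R => y + s *: u) (0 + u) by apply: is_deriveD.
    have -> : f (y + t *: u) = u by rewrite /u scalerA f_transl.
    by rewrite add0r in d2.
by move=> H1 H2 t; split; [exact: H1 | rewrite H2].
Qed.

Lemma final_sec xi : X xi ->
    (exists M : R, forall t, 0 <= t -> `|piv v (phi t xi)| <= M) ->
    exists e, [/\ X e, dotv v e = 0, piv v (f e) = 0,
      (fun t => piv v (phi t xi)) @ +oo --> e &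
      (forall e', X e' -> dotv v e' = 0 -> piv v (f e') = 0 -> e' = e)].
Proof.
move=> Xxi [M HM].
have pc : forall s, 0 <= s -> piv v (phi s xi) = piv v xi.
  move=> s s0; have := main_claim Xxi HM s0 => /eqP; rewrite eq_le => /andP[h _].
  by rewrite (w0 h) piv_shift.
set e := piv v xi.
have Xe : X e := Xpiv Xxi.
have pf : piv v (f xi) = 0.
  case: (flowP Xxi) => _ p0 [_ _ _ Hd] _.
  have d := Hd 0 (D0int Xxi); rewrite p0 in d.
  case: d => dx dval.
  pose quot := fun h : R => h^-1 *: (phi (h *: 1 + 0) xi - phi 0 xi).
  have Hc : quot @ 0^' --> f xi by rewrite -dval; exact: dx.
  have Hc' : quot @ 0^'+ --> f xi.
    apply: cvg_trans Hc => P /= HP.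
    move: HP; rewrite !nbhs_simpl /= /at_right /dnbhs /within /= => HP.
    by apply: filterS HP => h H hp; apply: H; rewrite gt_eqF.
  have qv : forall h, 0 < h -> exists c, quot h = 0 + c *: v.
    move=> h hp; have := main_claim Xxi HM (ltW hp) => /eqP; rewrite eq_le => /andP[h1 _].
    exists (h^-1 * - mu (phi h xi - xi)); rewrite /quot add0r p0.
    have -> : h *: (1:R) + 0 = h by rewrite addr0; apply: mulr1.
    have E := w0 h1.
    by rewrite {1}E addrAC subrr add0r scalerA.
  have wle : w 0 (f xi) <= 0.
    apply/ler_addgt0Pr => ep ep0; rewrite add0r.
    have ep' : 0 < ep / 2 * r by apply: mulr_gt0 => //; lra.
    have Fe : \forall h \near 0^'+, 0 < h /\ `|f xi - quot h| < ep / 2 * r.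
      near=> h; split; first by near: h; exact: nbhs_right_gt.
      near: h; move/cvgrPdist_lt: Hc'; exact.
    have [h [hp hd]] := filter_ex Fe.
    have [c qc] := qv h hp.
    have := w_tri 0 (quot h) (f xi).
    rewrite qc w_self_shift add0r.
    have := wlt hd; rewrite qc; lra.
  by rewrite (w0 wle) add0r /piv dotvZ Hvv mulr1 subrr.
have fe : f e = f xi by rewrite /e pivE f_transl.
have pfe : piv v (f e) = 0 by rewrite fe.
exists e; split => //.
- exact: dotv_piv.
- apply: cvg_near_cst; near=> t; apply: pc; near: t.
  by apply: nbhs_pinfty_ge; exact: num_real.
- move=> e' Xe' de' pfe'.
  have [De Ee] := equil Xe pfe (-1).
  have [De' Ee'] := equil Xe' pfe' (-1).
  have m1 : (-1 : R) < 0 by lra.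
  have [_ st] := mono_w Xe Xe' m1 De De'.
  rewrite Ee Ee' !scalerA w_shift in st.
  have wle : w e e' <= 0 by rewrite leNgt; apply/negP => /st; rewrite ltxx.
  have he := w0 wle.
  have : dotv v e' = dotv v e + - mu (e' - e) by rewrite {1}he dotvD dotvZ Hvv mulr1.
  rewrite de' /e dotv_piv add0r => /eqP; rewrite eq_sym oppr_eq0 => /eqP m0.
  by rewrite he m0 oppr0 scale0r addr0.
Unshelve. all: by end_near.
Qed.

End Cone.

Theorem corollary2 (R : realType) (n : nat) (X : set 'rV[R]_n)
  (f : 'rV[R]_n -> 'rV[R]_n) (D : 'rV[R]_n -> set R)
  (phi : R -> 'rV[R]_n -> 'rV[R]_n) (K : set 'rV[R]_n) (v : 'rV[R]_n) :
  closed X -> X = closure (interior X) ->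
  locally_lipschitz_on X f ->
  forward_complete X f D phi ->
  proper_cone K ->
  (forall xi1 xi2 t, X xi1 -> X xi2 -> t < 0 -> D xi1 t -> D xi2 t ->
     cone_succ K xi1 xi2 -> cone_gg K (phi t xi1) (phi t xi2)) ->
  interior K v -> dotv v v = 1 ->
  (forall xi (lam : R), X xi -> X (xi + lam *: v)) ->
  (forall xi (lam : R) t, X xi -> D xi t ->
     phi t (xi + lam *: v) = phi t xi + lam *: v) ->
  forall xi, X xi ->
    (exists M : R, forall t, 0 <= t -> `|piv v (phi t xi)| <= M) ->
    exists e, [/\ X e, dotv v e = 0, piv v (f e) = 0,
      (fun t => piv v (phi t xi)) @ +oo --> e &
      (forall e', X e' -> dotv v e' = 0 -> piv v (f e') = 0 -> e' = e)].
Proof.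
move=> HXc _ _ Hfc HK Hmono Hv Hvv HXt Hphit xi Xxi HM.
have [r r0 Hrb] := int_ball Hv.
exact: (final_sec HK Hv Hvv r0 Hrb Hfc HXt Hphit Hmono HXc Xxi HM).
Qed.
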